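(* Let $X\in\mathbb{R}^d$ be a random vector with mean $\theta_0$ and covariance matrix $\Sigma_0$, and assume (A1): $\Sigma_0$ is a finite covariance matrix of full rank $d$. Let $X_1,\dots,X_n$ ($n>d$) be independent copies of $X$, let $\Theta_n$ be the interior of the convex hull of $X_1,\dots,X_n$, let $\tilde\theta=\frac1n\sum_{i=1}^n X_i$ be the sample mean, and let $l(\theta)$ be the empirical log-likelihood ratio for the mean (defined in the context). Define the composite similarity mapping $h_n^C:\Theta_n\to\mathbb{R}^d$ by $$h_n^C(\theta)=\tilde\theta+\gamma\bigl(n,l(\theta)\bigr)(\theta-\tilde\theta),\qquad \gamma\bigl(n,l(\theta)\bigr)=1+\frac{l(\theta)}{2n},\qquad \theta\in\Theta_n.$$ Then: (i) $h_n^C$ has a unique fixed point, namely $\tilde\theta$; (ii) for each $\tau\ge 0$, the restriction of $h_n^C$ to the contour $c(\tau)=\{\theta\in\Theta_n: l(\theta)=\tau\}$ coincides with the similarity mapping $\theta\mapsto\tilde\theta+\gamma(n,\tau)(\theta-\tilde\theta)$ of $\mathbb{R}^d$ (with constant expansion factor $\gamma(n,\tau)=1+\tau/(2n)$); (iii) $h_n^C$ is a bijection from $\Theta_n$ onto $\mathbb{R}^d$.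
   Context: For $\theta\in\mathbb{R}^d$, the empirical likelihood ratio is $R(\theta)=\sup\{\prod_{i=1}^n nw_i : \sum_{i=1}^n w_i(X_i-\theta)=0,\ w_i\ge 0,\ \sum_{i=1}^n w_i=1\}$ (with $R(\theta)=0$ if the constraint set is empty or only allows zero products), and $l(\theta)=-2\log R(\theta)$; one has $0<R(\theta)\le1$ iff $\theta\in\Theta_n$, so $l$ is finite exactly on $\Theta_n$, and $l(\tilde\theta)=0$. Standing convention: whenever (A1) is assumed it is also understood that the convex hull of $X_1,\dots,X_n$ is nondegenerate (i.e. $\Theta_n$ is a nonempty open set), which holds with probability one under (A1) and $n>d$. *)

(* Defs.v *)
From HB Require Import structures.
From mathcomp Require Import all_boot all_order all_algebra.
From mathcomp Require Import all_classical all_reals all_analysis.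
Set Implicit Arguments. Unset Strict Implicit. Unset Printing Implicit Defensive.
Import Order.TTheory GRing.Theory Num.Theory.
Import numFieldNormedType.Exports.
Local Open Scope classical_set_scope.
Local Open Scope ring_scope.

Section EL.
Variables (R : realType) (d n : nat) (X : 'I_n -> 'rV[R]_d).

Definition conv_hull : set 'rV[R]_d :=
  [set t | exists w : 'I_n -> R, (forall i, 0 <= w i) /\ \sum_(i < n) w i = 1
           /\ t = \sum_(i < n) w i *: X i].

Definition Theta_n : set 'rV[R]_d := interior conv_hull.

Definition sample_mean : 'rV[R]_d := n%:R^-1 *: \sum_(i < n) X i.

Definition el_feasible (theta : 'rV[R]_d) (w : 'I_n -> R) : Prop :=
  (forall i, 0 <= w i) /\ \sum_(i < n) w i = 1 /\
  \sum_(i < n) w i *: (X i - theta) = 0.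

(* empirical likelihood ratio R(theta); sup of the empty set is 0 *)
Definition el_ratio (theta : 'rV[R]_d) : R :=
  sup [set p | exists w, el_feasible theta w /\ p = \prod_(i < n) (n%:R * w i)].

Definition el_loglik (theta : 'rV[R]_d) : R := - 2 * ln (el_ratio theta).

Definition gamma_factor (tau : R) : R := 1 + tau / (2 * n%:R).

Definition hC (theta : 'rV[R]_d) : 'rV[R]_d :=
  sample_mean + gamma_factor (el_loglik theta) *: (theta - sample_mean).

End EL.

(* Main.v *)
Require Import Defs.
From HB Require Import structures.
From mathcomp Require Import all_boot all_order all_algebra.
From mathcomp Require Import all_classical all_reals all_analysis.
From mathcomp Require Import ring lra.
Import Order.TTheory GRing.Theory Num.Theory.
Import numFieldNormedType.Exports.
Local Open Scope classical_set_scope.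
Local Open Scope ring_scope.


Section Real.
Variable R : realType.

Lemma ln_le_sub1 (x : R) : 0 < x -> ln x <= x - 1.
Proof.
move=> x0; have := expR_ge1Dx (ln x); rewrite lnK ?posrE //.
by rewrite -lerBrDl.
Qed.

Lemma ln_concave (a b l : R) : 0 < a -> 0 < b -> 0 <= l <= 1 ->
  l * ln a + (1 - l) * ln b <= ln (l * a + (1 - l) * b).
Proof.
move=> a0 b0 /andP[l0 l1].
set c := l * a + (1 - l) * b.
have c0 : 0 < c.
  rewrite /c; have [->|lp] := eqVneq l 0; first by rewrite mul0r add0r subr0 mul1r.
  apply: ltr_pwDl; first by rewrite mulr_gt0 // lt0r lp.
  by rewrite mulr_ge0 ?subr_ge0 // ltW.
have ha : ln a <= ln c + (a / c - 1).
  have := @ln_le_sub1 _ (divr_gt0 a0 c0).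
  by rewrite lnM ?posrE ?invr_gt0 // lnV ?posrE // lerBlDl addrC.
have hb : ln b <= ln c + (b / c - 1).
  have := @ln_le_sub1 _ (divr_gt0 b0 c0).
  by rewrite lnM ?posrE ?invr_gt0 // lnV ?posrE // lerBlDl addrC.
have e : l * (ln c + (a / c - 1)) + (1 - l) * (ln c + (b / c - 1)) = ln c.
  have : l * (a / c) + (1 - l) * (b / c) = 1.
    by rewrite !mulrA -mulrDl divff // gt_eqF.
  move=> e.
  have -> : l * (ln c + (a / c - 1)) + (1 - l) * (ln c + (b / c - 1))
     = ln c + (l * (a / c) + (1 - l) * (b / c)) - 1 by ring.
  by rewrite e addrK.
rewrite -e; apply: lerD; apply: ler_wpM2l => //; by rewrite subr_ge0.
Qed.
End Real.


Section Real2.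
Variable R : realType.
Lemma ln_quant (x N : R) : 0 < x -> x <= N -> 1 <= N ->
  ln x <= (x - 1) - (x - 1) ^+ 2 / (4 * N).
Proof.
move=> x0 xN N1.
have s0 : 0 < Num.sqrt x by rewrite sqrtr_gt0.
have xs : x = Num.sqrt x ^+ 2 by rewrite sqr_sqrtr // ltW.
move: (Num.sqrt x) s0 xs => s s0 xs.
have N0 : 0 < N by apply: (lt_le_trans ltr01 N1).
rewrite xs lnXn // mulr2n.
have hs := @ln_le_sub1 _ _ s0.
suff : (s ^+ 2 - 1) ^+ 2 / (4 * N) <= (s - 1) ^+ 2.
  move=> h.
  have e : s ^+ 2 - 1 - (s - 1) ^+ 2 = 2 * (s - 1) by ring.
  lra.
rewrite ler_pdivrMr ?mulr_gt0 //.
have -> : (s ^+ 2 - 1) ^+ 2 = (s - 1) ^+ 2 * (s + 1) ^+ 2 by ring.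
apply: ler_wpM2l; first exact: sqr_ge0.
rewrite xs in xN; nra.
Qed.
End Real2.


Lemma lip_cont (R : realType) (F : R -> R) (K : R) : 0 <= K ->
  (forall x y, `|F x - F y| <= K * `|x - y|) -> continuous F.
Proof.
move=> K0 hF x; apply/cvgrPdist_lt => e e0.
have K10 : 0 < K + 1 by rewrite ltr_wpDl.
apply/nbhs_ballP; exists (e / (K + 1)); first by apply: divr_gt0.
move=> y; rewrite /ball_ /= => hy.
apply: (le_lt_trans (hF x y)).
have : K * `|x - y| <= K * (e / (K + 1)) by apply: ler_wpM2l => //; exact: ltW.
move=> h; apply: (le_lt_trans h).
rewrite mulrA ltr_pdivrMr // ; nra.
Qed.

Lemma ivt01 (R : realType) (F : R -> R) (K b : R) : 0 <= K -> 0 <= b ->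
  (forall x y, `|F x - F y| <= K * `|x - y|) -> F 0 = 0 -> 1 <= F b ->
  exists2 c, 0 <= c <= b & F c = 1.
Proof.
move=> K0 b0 hF F0 Fb.
have := @IVT R F 0 b 1 b0 (continuous_subspaceT (@lip_cont R F K K0 hF)).
case.
  rewrite F0; apply/andP; split; first by rewrite ge_min ler01.
  by rewrite le_max Fb orbT.
by move=> c; rewrite in_itv /= => hc Fc; exists c.
Qed.

Section Clamp.
Context {R : realType}.
Definition clamp (b t : R) := if t < 0 then 0 else if b < t then b else t.

Lemma clamp_id (b t : R) : 0 <= t <= b -> clamp b t = t.
Proof. by move=> /andP[t0 tb]; rewrite /clamp ltNge t0 /= ltNge tb. Qed.

Lemma clamp_in (b t : R) : 0 <= b -> 0 <= clamp b t <= b.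
Proof.
move=> b0; rewrite /clamp; case: (ltP t 0) => h1; first by rewrite lexx b0.
by case: (ltP b t) => h2; apply/andP; split; lra.
Qed.

Lemma clamp_lip (b x y : R) : 0 <= b -> x <= y -> 0 <= clamp b y - clamp b x <= y - x.
Proof.
move=> b0 xy; rewrite /clamp.
case: (ltP x 0) => hx; case: (ltP y 0) => hy; case: (ltP b x) => hbx;
  case: (ltP b y) => hby; apply/andP; split; lra.
Qed.

Lemma lip_from_mono (G : R -> R) (K : R) :
  (forall x y, x <= y -> 0 <= G y - G x <= K * (y - x)) ->
  forall x y, `|G x - G y| <= K * `|x - y|.
Proof.
move=> H x y; case: (leP x y) => h.
  have /andP[h1 h2] := H x y h.
  by rewrite distrC [`|x - y|]distrC !ger0_norm // subr_ge0.
have /andP[h1 h2] := H y x (ltW h).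
by rewrite !ger0_norm // subr_ge0 ltW.
Qed.
End Clamp.

Section EL2.
Variables (R : realType) (d n : nat) (X : 'I_n -> 'rV[R]_d).
Hypothesis n0 : (0 < n)%N.
Hypothesis Th0 : Theta_n X !=set0.

Local Notation hull := (conv_hull X).
Local Notation Th := (Theta_n X).
Local Notation m := (sample_mean X).
Local Notation l := (el_loglik X).
Local Notation Rt := (el_ratio X).
Local Notation N := (n%:R : R).

Lemma zmodE (V : zmodType) (y a b : V) : y = a + (y - (a + b)) + b.
Proof. by rewrite opprD addrCA addNKr subrK. Qed.

Lemma sumc (c : R) : \sum_(i : 'I_n) c = c *+ n.
Proof. by rewrite sumr_const card_ord. Qed.

Lemma N_gt0 : 0 < N. Proof. by rewrite ltr0n. Qed.
Lemma N_ge1 : 1 <= N. Proof. by rewrite ler1n. Qed.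

Lemma lin_comb (a b : R) (v w : 'I_n -> R) :
  a *: (\sum_i v i *: X i) + b *: (\sum_i w i *: X i) =
  \sum_i (a * v i + b * w i) *: X i.
Proof.
rewrite !scaler_sumr -big_split /=; apply: eq_bigr => i _.
by rewrite scalerDl !scalerA.
Qed.

Lemma sum_lin (a b : R) (v w : 'I_n -> R) :
  \sum_i (a * v i + b * w i) = a * \sum_i v i + b * \sum_i w i.
Proof. by rewrite big_split /= -!mulr_sumr. Qed.

Lemma feasibleE th w : el_feasible X th w <->
  [/\ (forall i, 0 <= w i), \sum_i w i = 1 & th = \sum_i w i *: X i].
Proof.
have E : \sum_i w i *: (X i - th) = \sum_i w i *: X i - (\sum_i w i) *: th.
  rewrite scaler_suml -sumrB; apply: eq_bigr => i _; by rewrite scalerBr.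
rewrite /el_feasible E; split.
  move=> [h1 [h2 h3]]; split => //; move: h3; rewrite h2 scale1r.
  by move/eqP; rewrite subr_eq0 => /eqP.
by move=> [h1 h2 h3]; split => //; split => //; rewrite h2 scale1r h3 subrr.
Qed.

Lemma w_le1 (w : 'I_n -> R) i : (forall j, 0 <= w j) -> \sum_j w j = 1 -> w i <= 1.
Proof.
move=> w0 ws; rewrite -ws (bigD1 i) //=; rewrite lerDl.
by apply: sumr_ge0 => j _.
Qed.

Lemma hull_conv a b (t : R) : hull a -> hull b -> 0 <= t <= 1 ->
  hull (t *: a + (1 - t) *: b).
Proof.
move=> [v [v0 [v1 ->]]] [w [w0 [w1 ->]]] /andP[t0 t1].
exists (fun i => t * v i + (1 - t) * w i); split.
  move=> i; apply: addr_ge0; apply: mulr_ge0 => //; by rewrite subr_ge0.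
by rewrite sum_lin v1 w1 !mulr1 addrC subrK lin_comb.
Qed.

Lemma ballE (x y : 'rV[R]_d) e : ball x e y <-> `|x - y| < e.
Proof. by rewrite -ball_normE. Qed.

Lemma interiorP (x : 'rV[R]_d) (A : set 'rV[R]_d) :
  interior A x <-> exists2 e : R, 0 < e & ball x e `<=` A.
Proof. rewrite /interior; split; [by move/nbhs_ballP | by move=> H; apply/nbhs_ballP]. Qed.

Lemma ball_interior (x : 'rV[R]_d) (A : set 'rV[R]_d) e :
  ball x e `<=` A -> ball x e `<=` interior A.
Proof.
move=> bA y /ballE xy; apply/interiorP; exists (e - `|x - y|); first by rewrite subr_gt0.
move=> z /ballE yz; apply: bA; apply/ballE.
by rewrite (le_lt_trans (ler_distD y x z)) // -ltrBrDl.
Qed.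

Lemma Th_hull {x} : Th x -> hull x.
Proof. move=> /interiorP [e e0]; apply; exact: ballxx. Qed.

Lemma ball_hull th0 r q (t : R) : ball th0 r `<=` hull -> hull q -> 0 < t <= 1 ->
  ball (t *: th0 + (1 - t) *: q) (t * r) `<=` hull.
Proof.
move=> bA hq /andP[t0 t1] y /ballE hy.
set p := t *: th0 + (1 - t) *: q in hy *.
set z := th0 + t^-1 *: (y - p).
have hz : hull z.
  apply: bA; apply/ballE; rewrite /z opprD addrA subrr add0r normrN normrZ.
  by rewrite ger0_norm ?invr_ge0 ?ltW // mulrC ltr_pdivrMr // mulrC -normrN opprB.
have -> : y = t *: z + (1 - t) *: q.
  rewrite /z scalerDr scalerA mulfV ?gt_eqF // scale1r /p; exact: zmodE.
apply: hull_conv => //; rewrite ltW //.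
Qed.

Lemma mean_sum : m = \sum_i N^-1 *: X i.
Proof. by rewrite /sample_mean scaler_sumr. Qed.

Lemma pos_weights_ball th0 r (w : 'I_n -> R) (e : R) :
  0 < r -> ball th0 r `<=` hull -> 0 < e -> (forall i, e <= w i) -> \sum_i w i = 1 ->
  ball (\sum_i w i *: X i) (e / (1 + e) * r) `<=` hull.
Proof.
move=> r0 bA e0 we ws.
have [v [v0 [v1 vE]]] : hull th0 by apply: bA; exact: ballxx.
have e10 : 0 < 1 + e by rewrite ltr_wpDr // ltW.
set t := e / (1 + e).
set q := \sum_i ((1 + e) * w i - e * v i) *: X i.
have hq : hull q.
  exists (fun i => (1 + e) * w i - e * v i); split => //.
    move=> i; rewrite subr_ge0; have := @w_le1 v i v0 v1; have := we i.
    move=> h1 h2; nra.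
  rewrite big_split /= sumrN -!mulr_sumr ws v1; split => //; ring.
have -> : \sum_i w i *: X i = t *: th0 + (1 - t) *: q.
  rewrite vE lin_comb; apply: eq_bigr => i _; congr (_ *: _).
  rewrite /t; field; by rewrite gt_eqF.
apply: ball_hull => //; rewrite /t divr_gt0 //= ler_pdivrMr // mul1r lerDr ltW //.
Qed.

Lemma Th_m : Th m.
Proof.
case: Th0 => th0 /interiorP [r r0 bA].
apply/interiorP; exists (N^-1 / (1 + N^-1) * r).
  by rewrite mulr_gt0 // divr_gt0 ?invr_gt0 ?N_gt0 // ltr_wpDr // ltW ?invr_gt0 ?N_gt0.
rewrite mean_sum; apply: (@pos_weights_ball th0 r) => //; try by rewrite invr_gt0 N_gt0.
by rewrite /= sumc -[RHS](mulVf (lt0r_neq0 N_gt0)) mulr_natr.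
Qed.

Lemma Th_conv th0 q (t : R) : Th th0 -> hull q -> 0 < t <= 1 -> Th (t *: th0 + (1 - t) *: q).
Proof.
move=> /interiorP [r r0 bA] hq ht; apply/interiorP; exists (t * r).
  by case/andP: ht => t0 _; rewrite mulr_gt0.
exact: ball_hull.
Qed.


Lemma vec_id (s : R) (x y : 'rV[R]_d) : 1 + s != 0 ->
  x = (1 + s)^-1 *: (x + s *: (x - y)) + (s / (1 + s)) *: y.
Proof.
move=> h; rewrite scalerBr scalerDr scalerBr !scalerA.
rewrite [(1 + s)^-1 * s]mulrC addrA -scalerDl subrK.
have -> : (1 + s)^-1 + s / (1 + s) = 1 by field.
by rewrite scale1r.
Qed.

Lemma Th_pos_weights {th} : Th th -> exists w : 'I_n -> R, exists e : R,
  [/\ 0 < e, (forall i, e <= w i), \sum_i w i = 1 & th = \sum_i w i *: X i].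
Proof.
move=> /interiorP [r r0 bA].
set D := `|th - m|.
have D0 : 0 <= D by rewrite /D normr_ge0.
set s := r / (D + r).
have Dr0 : 0 < D + r by rewrite ltr_wpDl.
have s0 : 0 < s by rewrite divr_gt0.
have sD : s * D < r.
  rewrite /s mulrAC ltr_pdivrMr // ; nra.
have hq : hull (th + s *: (th - m)).
  apply: bA; apply/ballE; rewrite opprD addrA subrr add0r normrN normrZ.
  by rewrite ger0_norm ?ltW.
case: hq => v [v0 [v1 vE]].
have s10 : 0 < 1 + s by rewrite ltr_wpDr // ltW.
exists (fun i => (1 + s)^-1 * v i + (s / (1 + s)) * N^-1).
exists ((s / (1 + s)) * N^-1); split.
- by rewrite mulr_gt0 ?divr_gt0 ?invr_gt0 ?N_gt0.
- by move=> i; rewrite lerDr; apply: mulr_ge0; [rewrite invr_ge0 ltW | exact: v0].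
- rewrite (sum_lin _ _ v (fun _ => N^-1)) v1 /= sumc.
  rewrite -[_ *+ n]mulr_natr mulVf ?lt0r_neq0 ?N_gt0 //; field; exact: lt0r_neq0.
- rewrite (@vec_id s th m (lt0r_neq0 s10)) vE mean_sum.
  by rewrite (lin_comb _ _ v (fun _ => N^-1)).
Qed.

Definition Sset th := [set p | exists w, el_feasible X th w /\ p = \prod_(i < n) (N * w i)].

Lemma RtE th : Rt th = sup (Sset th). Proof. by []. Qed.

Lemma ln_prod (a : 'I_n -> R) : (forall i, 0 < a i) ->
  ln (\prod_(i < n) a i) = \sum_(i < n) ln (a i).
Proof.
move=> a0.
suff : 0 < \prod_(i < n) a i /\ ln (\prod_(i < n) a i) = \sum_(i < n) ln (a i) by case.
apply: (big_rec2 (fun x y => 0 < x /\ ln x = y)); first by rewrite ln1.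
move=> i x y _ [x0 <-]; split; first by rewrite mulr_gt0.
by rewrite lnM ?posrE.
Qed.

Lemma prod_bound {th w} : el_feasible X th w ->
  \prod_(i < n) (N * w i) <= expR (- (\sum_(i < n) (N * w i - 1) ^+ 2) / (4 * N)).
Proof.
move=> /feasibleE [w0 w1 _].
have [wp|wn] := pselect (forall i, 0 < w i); last first.
  have [i wi] : exists i, ~ 0 < w i.
    by apply: contrapT => h; apply: wn => i; apply: contrapT => h'; apply: h; exists i.
  have wi0 : w i = 0 by apply/eqP; rewrite eq_le w0 andbT; rewrite leNgt; apply/negP.
  by rewrite (bigD1 i) //= wi0 mulr0 mul0r expR_ge0.
have xp : forall i, 0 < N * w i by move=> i; rewrite mulr_gt0 ?N_gt0.
rewrite -[X in X <= _]lnK ?posrE ?prodr_gt0 // ler_expR ln_prod //.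
have h : \sum_(i < n) ln (N * w i) <=
    \sum_(i < n) ((N * w i - 1) - (N * w i - 1) ^+ 2 / (4 * N)).
  apply: ler_sum => i _; apply: ln_quant => //; last exact: N_ge1.
  rewrite -[X in _ <= X]mulr1 ler_wpM2l ?(ltW N_gt0) //; exact: (@w_le1 w i w0 w1).
apply: (le_trans h).
have A0 : \sum_(i < n) (N * w i - 1) = 0.
  by rewrite sumrB -mulr_sumr w1 mulr1 sumc -[_ *+ n]mulr_natr mul1r subrr.
by rewrite sumrB A0 sub0r mulNr -mulr_suml.
Qed.

Lemma prod_le1 {th w} : el_feasible X th w -> \prod_(i < n) (N * w i) <= 1.
Proof.
move=> hw; apply: (le_trans (prod_bound hw)); rewrite expR_le1 mulNr oppr_le0.
apply: divr_ge0; last by rewrite mulr_ge0 // (ltW N_gt0).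
by apply: sumr_ge0 => i _; exact: sqr_ge0.
Qed.

Lemma S_ub th : has_ubound (Sset th).
Proof. by exists 1 => p [w [hw ->]]; exact: prod_le1 hw. Qed.

Lemma S_le_Rt {th p} : Sset th p -> p <= Rt th.
Proof. by move=> hp; apply: (ub_le_sup (S_ub th)). Qed.

Lemma hull_S {th} : hull th -> Sset th !=set0.
Proof.
move=> [w [w0 [w1 thE]]]; exists (\prod_(i < n) (N * w i)); exists w; split => //.
by apply/feasibleE; split.
Qed.

Lemma Rt_le1 {th} : hull th -> Rt th <= 1.
Proof. by move=> h; apply: ge_sup; [exact: hull_S | move=> p [w [hw ->]]; exact: prod_le1 hw]. Qed.

Lemma Rt_gt0 {th} : Th th -> 0 < Rt th.
Proof.
move=> h; have [w [e [e0 we w1 thE]]] := Th_pos_weights h.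
have w0 : forall i, 0 < w i by move=> i; exact: lt_le_trans e0 (we i).
have hS : Sset th (\prod_(i < n) (N * w i)).
  exists w; split => //; apply/feasibleE; split => // i; exact: ltW.
apply: (lt_le_trans _ (S_le_Rt hS)).
by apply: prodr_gt0 => i _; rewrite mulr_gt0 ?N_gt0.
Qed.

Lemma l_ge0 {th} : Th th -> 0 <= l th.
Proof.
move=> h; have := ln_le0 (Rt_le1 (Th_hull h)); rewrite /el_loglik; lra.
Qed.

Lemma Rt_m : Rt m = 1.
Proof.
apply/le_anti; rewrite (Rt_le1 (Th_hull Th_m)) /=.
apply: S_le_Rt; exists (fun _ => N^-1); split.
  apply/feasibleE; split.
  - by move=> i; rewrite invr_ge0 (ltW N_gt0).
  - by rewrite sumc -[RHS](mulVf (lt0r_neq0 N_gt0)) mulr_natr.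
  - exact: mean_sum.
by rewrite big1 // => i _; exact: mulfV (lt0r_neq0 N_gt0).
Qed.

Lemma l_m : l m = 0.
Proof. by rewrite /el_loglik Rt_m ln1 mulr0. Qed.

Lemma ln_Rt_ub th B : Th th ->
  (forall w, el_feasible X th w -> (forall i, 0 < w i) -> ln (\prod_(i < n) (N * w i)) <= B) ->
  ln (Rt th) <= B.
Proof.
move=> h hB.
have : Rt th <= expR B.
  apply: ge_sup; first exact: hull_S (Th_hull h).
  move=> p [w [hw ->]].
  have [wp|wn] := pselect (forall i, 0 < w i).
    have pp : 0 < \prod_(i < n) (N * w i) by apply: prodr_gt0 => i _; rewrite mulr_gt0 ?N_gt0.
    by rewrite -(lnK (x:=\prod_(i < n) (N * w i))) ?posrE // ler_expR hB.
  have [w0 _ _] := (feasibleE th w).1 hw.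
  have [i wi] : exists i, ~ 0 < w i.
    by apply: contrapT => h'; apply: wn => i; apply: contrapT => h''; apply: h'; exists i.
  have wi0 : w i = 0 by apply/eqP; rewrite eq_le w0 andbT; rewrite leNgt; apply/negP.
  by rewrite (bigD1 i) //= wi0 mulr0 mul0r expR_ge0.
move=> hle; rewrite -(expRK B) ler_ln ?posrE ?expR_gt0 ?Rt_gt0 //.
Qed.

Lemma ln_Rt_lb th w : Th th -> el_feasible X th w -> (forall i, 0 < w i) ->
  ln (\prod_(i < n) (N * w i)) <= ln (Rt th).
Proof.
move=> h hw wp.
have pp : 0 < \prod_(i < n) (N * w i) by apply: prodr_gt0 => i _; rewrite mulr_gt0 ?N_gt0.
rewrite ler_ln ?posrE ?Rt_gt0 //; apply: S_le_Rt; by exists w.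
Qed.

Lemma diff_mean (w : 'I_n -> R) :
  \sum_i w i *: X i - m = N^-1 *: \sum_i (N * w i - 1) *: X i.
Proof.
rewrite /sample_mean !scaler_sumr -sumrB; apply: eq_bigr => i _.
rewrite scalerA -scalerBl; congr (_ *: _); field; exact: lt0r_neq0 N_gt0.
Qed.

Lemma l_pos {th} : Th th -> th != m -> 0 < l th.
Proof.
move=> h hne.
set D := `|th - m|; have D0 : 0 < D by rewrite normr_gt0 subr_eq0.
set K := \sum_i `|X i| + 1.
have K1 : 0 <= \sum_i `|X i| by apply: sumr_ge0 => i _; exact: normr_ge0.
have K0 : 0 < K by rewrite /K ltr_wpDl.
set t := D / K.
have t0 : 0 < t by rewrite divr_gt0.
have tK : t * K = D by rewrite /t divfK // lt0r_neq0.
set c := t ^+ 2 / (4 * N).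
have c0 : 0 < c by apply: divr_gt0; [exact: exprn_gt0 | rewrite mulr_gt0 ?N_gt0].
suff : ln (Rt th) <= - c by rewrite /el_loglik => hh; lra.
apply: ln_Rt_ub => // w hw wp.
have [w0 w1 thE] := (feasibleE th w).1 hw.
have hp := prod_bound hw.
set S := \sum_(i < n) (N * w i - 1) ^+ 2 in hp.
have pp : 0 < \prod_(i < n) (N * w i) by apply: prodr_gt0 => i _; rewrite mulr_gt0 ?N_gt0.
have hS : t ^+ 2 <= S.
  have [i hi] : exists i, t <= `|N * w i - 1|.
    apply: contrapT => hn.
    have hall : forall i, `|N * w i - 1| < t.
      by move=> i; rewrite ltNge; apply/negP => hh; apply: hn; exists i.
    have hD : D <= N^-1 * (t * (K - 1)).
      rewrite /D thE diff_mean normrZ ger0_norm ?invr_ge0 ?(ltW N_gt0) //.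
      apply: ler_wpM2l; first by rewrite invr_ge0 (ltW N_gt0).
      apply: (le_trans (ler_norm_sum _ _ _)).
      rewrite /K addrK mulr_sumr; apply: ler_sum => j _; rewrite normrZ.
      by apply: ler_wpM2r; [exact: normr_ge0 | exact: ltW].
    have N1 : N^-1 <= 1 by rewrite invf_le1 ?N_gt0 ?N_ge1.
    have Ni0 : 0 < N^-1 by rewrite invr_gt0 N_gt0.
    rewrite -tK in hD; nra.
  have hi2 : t ^+ 2 <= (N * w i - 1) ^+ 2.
    move: hi; rewrite ler_normr => /orP [] hh; nra.
  apply: (le_trans hi2); rewrite /S (bigD1 i) //= lerDl.
  by apply: sumr_ge0 => j _; exact: sqr_ge0.
apply: (le_trans (y := - S / (4 * N))).
  by rewrite -[X in _ <= X](expRK) ler_ln ?posrE ?expR_gt0.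
rewrite /c !mulNr lerN2; apply: ler_wpM2r => //.
Qed.

Lemma ln_Rt_ub' {th} (a B : R) : Th th -> 0 < a ->
  (forall w, el_feasible X th w -> (forall i, 0 < w i) -> a * ln (\prod_(i < n) (N * w i)) <= B) ->
  a * ln (Rt th) <= B.
Proof.
move=> h a0 hB; rewrite mulrC -ler_pdivlMr //; apply: ln_Rt_ub => // w hw wp.
by rewrite ler_pdivlMr // mulrC; apply: hB.
Qed.

Lemma Th_comb {th1 th2} (t : R) : Th th1 -> Th th2 -> 0 <= t <= 1 ->
  Th (t *: th1 + (1 - t) *: th2).
Proof.
move=> h1 h2 /andP[t0 t1]; have [->|tn] := eqVneq t 0.
  by rewrite scale0r add0r subr0 scale1r.
by apply: Th_conv => //; [exact: Th_hull | rewrite lt0r tn t0].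
Qed.

Lemma ln_core {th1 th2} (t : R) w1 w2 : 0 <= t <= 1 -> Th th1 -> Th th2 ->
  el_feasible X th1 w1 -> (forall i, 0 < w1 i) ->
  el_feasible X th2 w2 -> (forall i, 0 < w2 i) ->
  t * ln (\prod_(i < n) (N * w1 i)) + (1 - t) * ln (\prod_(i < n) (N * w2 i))
  <= ln (Rt (t *: th1 + (1 - t) *: th2)).
Proof.
move=> /andP[t0 t1] h1 h2 hw1 wp1 hw2 wp2.
have [w10 w11 E1] := (feasibleE th1 w1).1 hw1.
have [w20 w21 E2] := (feasibleE th2 w2).1 hw2.
set w := fun i => t * w1 i + (1 - t) * w2 i.
have t1' : 0 <= 1 - t by rewrite subr_ge0.
have wp : forall i, 0 < w i.
  move=> i; rewrite /w; have [->|tn] := eqVneq t 0.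
    by rewrite mul0r add0r subr0 mul1r.
  apply: ltr_pwDl; first by rewrite mulr_gt0 // lt0r tn t0.
  by rewrite mulr_ge0 // ltW.
have hw : el_feasible X (t *: th1 + (1 - t) *: th2) w.
  apply/feasibleE; split.
  - by move=> i; apply: ltW.
  - by rewrite /w sum_lin w11 w21 !mulr1 addrC subrK.
  - by rewrite E1 E2 lin_comb.
have hTh : Th (t *: th1 + (1 - t) *: th2) by apply: Th_comb => //; rewrite t0 t1.
apply: (le_trans _ (@ln_Rt_lb _ w hTh hw wp)).
have xp1 : forall i, 0 < N * w1 i by move=> i; rewrite mulr_gt0 ?N_gt0.
have xp2 : forall i, 0 < N * w2 i by move=> i; rewrite mulr_gt0 ?N_gt0.
have xp : forall i, 0 < N * w i by move=> i; rewrite mulr_gt0 ?N_gt0.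
rewrite !ln_prod // !mulr_sumr -big_split /=; apply: ler_sum => i _.
have -> : N * w i = t * (N * w1 i) + (1 - t) * (N * w2 i) by rewrite /w; ring.
by apply: ln_concave => //; rewrite t0 t1.
Qed.

Lemma l_convex {th1 th2} (t : R) : Th th1 -> Th th2 -> 0 <= t <= 1 ->
  l (t *: th1 + (1 - t) *: th2) <= t * l th1 + (1 - t) * l th2.
Proof.
move=> h1 h2 ht; have /andP[t0 t1] := ht.
have [->|tn] := eqVneq t 0.
  by rewrite scale0r add0r subr0 scale1r mul0r add0r mul1r.
have [->|tn1] := eqVneq t 1.
  by rewrite subrr scale0r addr0 scale1r mul0r addr0 mul1r.
have tp : 0 < t by rewrite lt0r tn t0.
have tp' : 0 < 1 - t by rewrite subr_gt0 lt_neqAle tn1 t1.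
set A := ln (Rt (t *: th1 + (1 - t) *: th2)).
suff : t * ln (Rt th1) + (1 - t) * ln (Rt th2) <= A.
  rewrite /el_loglik -/A => hh.
  have -> : t * (- 2 * ln (Rt th1)) + (1 - t) * (- 2 * ln (Rt th2)) =
     - 2 * (t * ln (Rt th1) + (1 - t) * ln (Rt th2)) by ring.
  lra.
have step : forall w2, el_feasible X th2 w2 -> (forall i, 0 < w2 i) ->
    t * ln (Rt th1) <= A - (1 - t) * ln (\prod_(i < n) (N * w2 i)).
  move=> w2 hw2 wp2; apply: ln_Rt_ub' => // w1 hw1 wp1.
  rewrite lerBrDr; exact: ln_core.
rewrite -lerBrDl; apply: ln_Rt_ub' => // w2 hw2 wp2.
rewrite lerBrDl -lerBrDr; exact: step.
Qed.

Lemma prod_le_one_term (x : 'I_n -> R) i : (forall j, 0 <= x j <= N) ->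
  \prod_(j < n) x j <= x i * N ^+ n.
Proof.
move=> hx; have [x0 _] := andP (hx i).
rewrite (bigD1 i) //= ler_wpM2l //.
apply: (le_trans (y := \prod_(j < n | j != i) N)); first exact: ler_prod.
have -> : N ^+ n = \prod_(j < n) N by rewrite prodr_const card_ord.
rewrite [X in _ <= X](bigD1 i) //= ler_peMl ?N_ge1 //.
by apply: prodr_ge0 => j _; rewrite (ltW N_gt0).
Qed.

Lemma l_bounded_ball (L : R) : exists2 rho : R, 0 < rho &
  forall th, Th th -> l th <= L -> ball th rho `<=` hull.
Proof.
case: Th0 => th0 /interiorP [r r0 bA].
set c := expR (- L / 2).
have c0 : 0 < c by exact: expR_gt0.
have Nn0 : 0 < N ^+ n.+1 by rewrite exprn_gt0 // N_gt0.
set e := c / (2 * N ^+ n.+1).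
have e0 : 0 < e by rewrite divr_gt0 // mulr_gt0.
exists (e / (1 + e) * r).
  by rewrite mulr_gt0 // divr_gt0 // ltr_wpDr // ltW.
move=> th h hl.
have Rc : c <= Rt th.
  rewrite -(lnK (x := Rt th)) ?posrE ?Rt_gt0 // ler_expR.
  move: hl; rewrite /el_loglik; lra.
have hs : has_sup (Sset th) by split; [exact: hull_S (Th_hull h) | exact: S_ub].
have [p [w [hw ->]] hp] := sup_adherent (divr_gt0 c0 (ltr0Sn R 1)) hs.
have [w0 w1 thE] := (feasibleE th w).1 hw.
rewrite thE; apply: (@pos_weights_ball th0 r) => // i.
have hx : forall j, 0 <= N * w j <= N.
  move=> j; rewrite mulr_ge0 ?(ltW N_gt0) //=.
  rewrite -[X in _ <= X]mulr1 ler_wpM2l ?(ltW N_gt0) //; exact: (@w_le1 w j w0 w1).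
have := @prod_le_one_term (fun j => N * w j) i hx.
have : c / 2 < \prod_(j < n) (N * w j).
  move: hp; rewrite -/(Rt th) => hp.
  have e2 : c - c / 2 = c / 2 by field.
  lra.
move=> h1 h2; have h3 := lt_le_trans h1 h2.
have eq1 : w i * N ^+ n.+1 = N * w i * N ^+ n by rewrite exprS; ring.
rewrite /e invfM mulrA ler_pdivrMr // eq1; exact: ltW.
Qed.

Lemma comb_m x (t : R) : t *: x + (1 - t) *: m = m + t *: (x - m).
Proof. by rewrite scalerBl scale1r scalerBr addrCA. Qed.

Lemma l_ray {th} (s : R) : Th th -> 0 <= s <= 1 -> l (m + s *: (th - m)) <= s * l th.
Proof.
move=> h hs; rewrite -comb_m.
by apply: (le_trans (l_convex s h Th_m hs)); rewrite l_m mulr0 addr0.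
Qed.

Lemma comb2 (t a c : R) (u : 'rV[R]_d) :
  t *: (m + a *: u) + (1 - t) *: (m + c *: u) = m + (t * a + (1 - t) * c) *: u.
Proof.
rewrite !scalerDr !scalerA addrACA -!scalerDl [t + _]addrC subrK scale1r //.
Qed.

Lemma aux1 (x y z a : R) : x <= a * y + (1 - a) * z -> 0 <= (1 - a) * y ->
  x - y <= (1 - a) * z.
Proof. move=> *; lra. Qed.

Lemma aux2 (a c b fa fc fb K1 q : R) : 0 <= a -> a <= c -> c <= b -> 0 <= fa ->
  fa <= fc -> fc <= fb -> fc - fa <= (c - a) * K1 -> 0 <= K1 -> 0 < q ->
  0 <= c * (1 + fc * q) - a * (1 + fa * q) <= (1 + fb * q + b * K1 * q) * (c - a).
Proof.
move=> a0 ac cb fa0 fac fcb hK K0 q0.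
have c0 : 0 <= c by exact: le_trans a0 ac.
have ca : 0 <= c - a by rewrite subr_ge0.
have fca : 0 <= fc - fa by rewrite subr_ge0.
have h1 : c * (fc - fa) <= b * ((c - a) * K1) by apply: ler_pM.
have h2 : (c - a) * fa <= (c - a) * fb by apply: ler_wpM2l => //; exact: le_trans fac fcb.
have h3 : 0 <= c * (fc - fa) + (c - a) * fa by apply: addr_ge0; apply: mulr_ge0.
have h4 : q * (c * (fc - fa) + (c - a) * fa) <= q * (b * ((c - a) * K1) + (c - a) * fb).
  by apply: ler_wpM2l; [exact: ltW | exact: lerD].
have h5 : 0 <= q * (c * (fc - fa) + (c - a) * fa) by apply: mulr_ge0 => //; exact: ltW.
apply/andP; split; lra.
Qed.

Lemma aux3 (s l' L q : R) : 0 < s < 1 -> 0 <= l' -> l' <= s * L -> 0 <= L -> 0 < q ->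
  s * (1 + l' * q) < 1 + L * q.
Proof.
move=> /andP[s0 s1] l0 lL L0 q0.
have h1 : s * l' <= l' by rewrite ler_piMl // ltW.
have h2 : s * L <= L by rewrite ler_piMl // ltW.
have h3 : q * (s * l') <= q * L by apply: ler_wpM2l; [exact: ltW | lra].
lra.
Qed.

Section Ray.
Variable u : 'rV[R]_d.
Local Notation I t := (Th (m + t *: u)).
Local Notation f t := (l (m + t *: u)).

Lemma I0 : I 0.
Proof. by rewrite scale0r addr0; exact: Th_m. Qed.

Lemma ray_pt (s t : R) : t != 0 -> m + (s / t) *: ((m + t *: u) - m) = m + s *: u.
Proof. by move=> tn; rewrite addrAC subrr add0r scalerA divfK. Qed.

Lemma I_down (s t : R) : I t -> 0 <= s <= t -> I s.
Proof.
move=> It /andP[s0 st]; have [t0|tn] := eqVneq t 0.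
  have -> : s = 0 by apply/le_anti; rewrite s0 -t0 st.
  exact: I0.
have tp : 0 < t by rewrite lt0r tn (le_trans s0 st).
have -> : m + s *: u = (s / t) *: (m + t *: u) + (1 - s / t) *: m.
  by rewrite comb_m (@ray_pt s t tn).
apply: (Th_comb (s / t) It Th_m).
by rewrite divr_ge0 ?(ltW tp) //= ler_pdivrMr // mul1r.
Qed.

Lemma f_ray (s t : R) : I t -> 0 <= s <= t -> 0 < t -> f s <= (s / t) * f t.
Proof.
move=> It /andP[s0 st] tp; rewrite -(@ray_pt s t (lt0r_neq0 tp)); apply: l_ray => //.
by rewrite divr_ge0 ?(ltW tp) //= ler_pdivrMr // mul1r.
Qed.

Lemma f_mono (s t : R) : I t -> 0 <= s <= t -> f s <= f t.
Proof.
move=> It hst; have /andP[s0 st] := hst; have [t0|tn] := eqVneq t 0.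
  by have -> : s = t by apply/le_anti; rewrite st t0 s0.
have tp : 0 < t by rewrite lt0r tn (le_trans s0 st).
apply: (le_trans (@f_ray s t It hst tp)); rewrite ler_piMl ?l_ge0 //.
by rewrite ler_pdivrMr // mul1r.
Qed.

Lemma f_lip (s t b b' : R) : I b' -> 0 <= s <= t -> t <= b -> b < b' ->
  f t - f s <= (t - s) * (f b' / (b' - b)).
Proof.
move=> Ib' /andP[s0 st] tb bb'.
have bs : 0 < b' - s by rewrite subr_gt0 (le_lt_trans st (le_lt_trans tb bb')).
have bb : 0 < b' - b by rewrite subr_gt0.
have Is : I s by apply: (@I_down s b' Ib'); rewrite s0 /= (le_trans st (le_trans tb (ltW bb'))).
set la := (b' - t) / (b' - s).
have la0 : 0 <= la <= 1.
  rewrite /la divr_ge0 ?(ltW bs) ?subr_ge0 ?(le_trans tb (ltW bb')) //=.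
  by rewrite ler_pdivrMr // mul1r lerD2l lerN2.
have e : la * s + (1 - la) * b' = t by rewrite /la; field; exact: lt0r_neq0.
have hc := l_convex la Is Ib' la0; rewrite comb2 e in hc.
have fs0 : 0 <= f s by exact: l_ge0.
have fb0 : 0 <= f b' by exact: l_ge0.
have e1 : 1 - la = (t - s) / (b' - s) by rewrite /la; field; exact: lt0r_neq0.
have h1 : f t - f s <= (1 - la) * f b'.
  have /andP[la0' la1] := la0.
  have : 0 <= (1 - la) * f s by apply: mulr_ge0; [rewrite subr_ge0; exact: la1 | exact: fs0].
  exact: aux1 hc.
apply: (le_trans h1); rewrite e1 mulrAC [X in _ <= X]mulrA.
apply: ler_wpM2l; first by rewrite mulr_ge0 // subr_ge0.
by rewrite lef_pV2 ?posrE // lerD2l lerN2 (le_trans st tb).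
Qed.

Lemma I_open (t : R) : u != 0 -> I t -> exists2 t' : R, t < t' & I t'.
Proof.
move=> un /interiorP [r r0 bA].
have u0 : 0 < `|u| by rewrite normr_gt0.
exists (t + r / (2 * `|u|)); first by rewrite ltrDl divr_gt0 // mulr_gt0.
apply: (@ball_interior _ _ _ bA); apply/ballE.
rewrite opprD addrACA subrr add0r -scalerBl normrZ opprD addrA subrr add0r normrN.
rewrite ger0_norm ?divr_ge0 ?mulr_ge0 ?(ltW u0) ?(ltW r0) //.
have -> : r / (2 * `|u|) * `|u| = r / 2 by field; rewrite lt0r_neq0.
lra.
Qed.

Lemma I_bound (t : R) : I t -> 0 <= t -> t * `|u| <= \sum_i `|X i| + `|m|.
Proof.
move=> It t0; have [w [w0 [w1 wE]]] := Th_hull It.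
have -> : t * `|u| = `|(m + t *: u) - m| by rewrite addrAC subrr add0r normrZ ger0_norm.
apply: (le_trans (ler_normB _ _)); apply: lerD => //.
rewrite wE; apply: (le_trans (ler_norm_sum _ _ _)); apply: ler_sum => i _.
rewrite normrZ ger0_norm // ler_piMl //; exact: (@w_le1 w i w0 w1).
Qed.

Lemma exists_big : u != 0 -> exists b : R, [/\ 0 <= b, I b & 1 <= b * gamma_factor n (f b)].
Proof.
move=> un; apply: contrapT => hn.
have hlt : forall b : R, 0 <= b -> I b -> b * gamma_factor n (f b) < 1.
  move=> b b0 Ib; rewrite ltNge; apply/negP => hh; apply: hn; exists b; split => //.
have u0 : 0 < `|u| by rewrite normr_gt0.
set E := [set t : R | 0 <= t /\ I t].
have hasE : has_sup E.
  split; first by exists 0; split => //; exact: I0.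
  exists ((\sum_i `|X i| + `|m|) / `|u|) => t [t0 It].
  by rewrite ler_pdivlMr //; exact: I_bound.
set T := sup E.
have [t' tt' It'] := @I_open 0 un I0.
have Tt' : t' <= T by apply: sup_upper_bound => //; split => //; exact: ltW.
have T0 : 0 < T by exact: lt_le_trans tt' Tt'.
have [b' [b0' Ib'] hb'] := sup_adherent (divr_gt0 T0 (ltr0Sn R 1)) hasE.
rewrite -/T in hb'.
have Np := N_gt0.
set L := f b' + 4 * N / T.
have hL : forall t, E t -> f t <= L.
  move=> t [t0 It].
  have hN : 0 <= 4 * N / T by rewrite divr_ge0 ?mulr_ge0 ?(ltW Np) ?(ltW T0).
  case: (leP t b') => tb.
    by apply: (le_trans (@f_mono t b' Ib' _)); [rewrite t0 tb | rewrite lerDl].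
  have := hlt t t0 It; rewrite /gamma_factor.
  set a := f t / (2 * N).
  have fa : f t = 2 * N * a by rewrite /a; field; exact: lt0r_neq0.
  have a0 : 0 <= a by rewrite /a divr_ge0 ?l_ge0 // mulr_ge0 // (ltW Np).
  move=> h.
  have T2 : T <= 2 * t by lra.
  have Ta1 : T * a <= (2 * t) * a by rewrite ler_wpM2r.
  have Ta : T * a < 2 by lra.
  have : f t <= 4 * N / T.
    rewrite ler_pdivlMr // fa.
    have := ler_wpM2l (mulr_ge0 (ler0n R 2) (ltW Np)) (ltW Ta); lra.
  move=> h2; apply: (le_trans h2); rewrite lerDr; exact: l_ge0.
have [rho rho0 hball] := l_bounded_ball L.
set k := rho / (3 * `|u|).
have k0 : 0 < k by rewrite divr_gt0 // mulr_gt0.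
have [b [b0 Ib] hb] := sup_adherent k0 hasE.
rewrite -/T in hb.
have It2 : I (b + 2 * k).
  apply: (@ball_interior _ _ _ (hball _ Ib (hL b (conj b0 Ib)))); apply/ballE.
  rewrite opprD addrACA subrr add0r -scalerBl normrZ opprD addrA subrr add0r normrN.
  rewrite ger0_norm ?mulr_ge0 ?(ltW k0) ?(ltW rho0) //.
  have -> : 2 * k * `|u| = 2 / 3 * rho by rewrite /k; field; rewrite lt0r_neq0.
  lra.
have : b + 2 * k <= T.
  apply: (sup_upper_bound hasE); split; last exact: It2.
  by apply: addr_ge0 => //; apply: mulr_ge0; [exact: ler0n | exact: ltW].
lra.
Qed.

Lemma ray_surj_nz : u != 0 -> exists2 c : R, I c & c * gamma_factor n (f c) = 1.
Proof.
move=> un; have [b [b0 Ib hb]] := exists_big un.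
have [b' bb' Ib'] := @I_open b un Ib.
have bb : 0 < b' - b by rewrite subr_gt0.
set K1 := f b' / (b' - b).
have K10 : 0 <= K1 by apply: divr_ge0; [exact: l_ge0 | exact: ltW].
set q := (2 * N)^-1.
have q0 : 0 < q by rewrite invr_gt0 mulr_gt0 // N_gt0.
set g := fun t => t * (1 + f t * q).
have gE : forall t, t * gamma_factor n (f t) = g t by [].
set K2 := 1 + f b * q + b * K1 * q.
have K20 : 0 <= K2.
  apply: addr_ge0; last by apply: mulr_ge0; [apply: mulr_ge0 | exact: ltW].
  by apply: addr_ge0 => //; apply: mulr_ge0; [exact: l_ge0 | exact: ltW].
have gl : forall a c, 0 <= a -> a <= c -> c <= b -> 0 <= g c - g a <= K2 * (c - a).
  move=> a c a0 ac cb.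
  have Ic : I c by apply: (@I_down c b Ib); rewrite (le_trans a0 ac) cb.
  have Ia : I a by apply: (@I_down a b Ib); rewrite a0 (le_trans ac cb).
  have fa0 : 0 <= f a by exact: l_ge0 Ia.
  have fac : f a <= f c by apply: (@f_mono a c Ic); rewrite a0 ac.
  have fcb : f c <= f b by apply: (@f_mono c b Ib); rewrite (le_trans a0 ac) cb.
  have hK : f c - f a <= (c - a) * K1.
    by apply: (@f_lip a c b b' Ib') => //; rewrite a0 ac.
  exact: aux2 a0 ac cb fa0 fac fcb hK K10 q0.
have Flip : forall x y, `|g (clamp b x) - g (clamp b y)| <= K2 * `|x - y|.
  apply: (@lip_from_mono _ (fun t => g (clamp b t))) => x y xy /=.
  have /andP[c1 c2] := @clamp_lip _ b x y b0 xy.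
  have /andP[x0 xb] := @clamp_in _ b x b0.
  have /andP[y0 yb] := @clamp_in _ b y b0.
  have cxy : clamp b x <= clamp b y by rewrite -subr_ge0.
  have /andP[g1 g2] := gl _ _ x0 cxy yb.
  apply/andP; split => //; apply: (le_trans g2); exact: ler_wpM2l.
have F0 : g (clamp b 0) = 0 by rewrite clamp_id ?lexx ?b0 // /g mul0r.
have Fb : 1 <= g (clamp b b) by rewrite clamp_id ?lexx ?b0 // -gE.
have [c /andP[c0 cb] Fc] := @ivt01 R (fun t => g (clamp b t)) K2 b K20 b0 Flip F0 Fb.
exists c; first by apply: (@I_down c b Ib); rewrite c0 cb.
by rewrite gE -Fc /= clamp_id // c0 cb.
Qed.

Lemma ray_surj : exists2 c : R, I c & c * gamma_factor n (f c) = 1.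
Proof.
have [u0|un] := eqVneq u 0; last exact: ray_surj_nz.
exists 1; rewrite u0 scaler0 addr0; first exact: Th_m.
by rewrite l_m /gamma_factor mul0r addr0 mul1r.
Qed.

End Ray.

Lemma gamma_pos (x : R) : 0 <= x -> 0 < gamma_factor n x.
Proof.
move=> x0; rewrite /gamma_factor ltr_wpDr //.
by rewrite divr_ge0 // mulr_ge0 // (ltW N_gt0).
Qed.

Lemma hC_fix th : Th th -> (hC X th = th <-> th = m).
Proof.
move=> h; split; last by move=> ->; rewrite /hC subrr scaler0 addr0.
rewrite /hC => E; apply/eqP; apply: contraT => hne.
have lp := l_pos h hne.
have : (gamma_factor n (l th) - 1) *: (th - m) = 0.
  rewrite scalerBl scale1r; apply/eqP; rewrite subr_eq0; apply/eqP.
  by rewrite -{3}E addrAC subrr add0r.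
move/eqP; rewrite scaler_eq0 => /orP [] h'; last by move: h'; rewrite subr_eq0 (negbTE hne).
move: h'; rewrite /gamma_factor addrAC subrr add0r => /eqP h'.
have : 0 < l th / (2 * N) by rewrite divr_gt0 // mulr_gt0 // N_gt0.
by rewrite h' ltxx.
Qed.

Lemma no_lt x y : Th x -> Th y -> x != m ->
  gamma_factor n (l x) *: (x - m) = gamma_factor n (l y) *: (y - m) ->
  ~ (gamma_factor n (l x) < gamma_factor n (l y)).
Proof.
move=> hx hy xm E lt.
set gx := gamma_factor n (l x) in E lt.
set gy := gamma_factor n (l y) in E lt.
have gx0 : 0 < gx by exact: gamma_pos (l_ge0 hx).
have gy0 : 0 < gy by exact: gamma_pos (l_ge0 hy).
set c := gx / gy.
have c0 : 0 < c < 1 by rewrite divr_gt0 //= ltr_pdivrMr // mul1r.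
have yE : y = m + c *: (x - m).
  have : y - m = c *: (x - m) by rewrite /c mulrC -scalerA E scalerA mulVf ?scale1r // lt0r_neq0.
  by move=> <-; rewrite addrC subrK.
have hl : l y <= c * l x.
  rewrite {1}yE; apply: l_ray; first exact: hx.
  by have /andP[c1 c2] := c0; apply/andP; split; apply: ltW.
have q0 : 0 < (2 * N)^-1 by rewrite invr_gt0 mulr_gt0 // N_gt0.
have := @aux3 c (l y) (l x) ((2 * N)^-1) c0 (l_ge0 hy) hl (l_ge0 hx) q0.
have -> : c * (1 + l y * (2 * N)^-1) = c * gy by [].
have -> : 1 + l x * (2 * N)^-1 = gx by [].
by rewrite /c divfK ?lt0r_neq0 // ltxx.
Qed.

Lemma hC_inj : set_inj Th (hC X).
Proof.
move=> x y /set_mem hx /set_mem hy; rewrite /hC => /addrI E.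
have gx0 : 0 < gamma_factor n (l x) by exact: gamma_pos (l_ge0 hx).
have gy0 : 0 < gamma_factor n (l y) by exact: gamma_pos (l_ge0 hy).
have [xm|xm] := eqVneq x m.
  move: E; rewrite xm subrr scaler0 => /esym/eqP; rewrite scaler_eq0 (negbTE (lt0r_neq0 gy0)) /=.
  by rewrite subr_eq0 => /eqP.
have [ym|ym] := eqVneq y m.
  move: E; rewrite ym subrr scaler0 => /eqP; rewrite scaler_eq0 (negbTE (lt0r_neq0 gx0)) /=.
  by rewrite subr_eq0 (negbTE xm).
have h1 := @no_lt x y hx hy xm E.
have h2 := @no_lt y x hy hx ym (esym E).
have eg : gamma_factor n (l x) = gamma_factor n (l y).
  by apply/le_anti; rewrite !leNgt; apply/andP; split; apply/negP.
move: E; rewrite eg => /(scalerI (lt0r_neq0 gy0)); exact: addIr.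
Qed.

Lemma main_lemma :
  (Th m /\ forall th, Th th -> (hC X th = th <-> th = m)) /\
  (forall tau : R, 0 <= tau -> forall th, Th th -> l th = tau ->
     hC X th = m + gamma_factor n tau *: (th - m)) /\
  set_bij Th [set: 'rV[R]_d] (hC X).
Proof.
split; first by split; [exact: Th_m | exact: hC_fix].
split; first by move=> tau _ th _ <-.
split; [by [] | exact: hC_inj |].
move=> y _; have [c Ic gc] := ray_surj (y - m).
exists (m + c *: (y - m)) => //.
rewrite /hC addrAC subrr add0r scalerA mulrC gc scale1r addrC subrK //.
Qed.

End EL2.



Theorem theorem1 (R : realType) (d n : nat) (X : 'I_n -> 'rV[R]_d) :
  (d < n)%N ->
  Theta_n X !=set0 ->
  (* (i) unique fixed point, namely the sample mean *)
  (Theta_n X (sample_mean X) /\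
   forall theta, Theta_n X theta -> (hC X theta = theta <-> theta = sample_mean X)) /\
  (* (ii) on each contour c(tau), h_n^C is the similarity with factor gamma(n,tau) *)
  (forall tau : R, 0 <= tau -> forall theta, Theta_n X theta -> el_loglik X theta = tau ->
     hC X theta = sample_mean X + gamma_factor n tau *: (theta - sample_mean X)) /\
  (* (iii) bijection from Theta_n onto R^d *)
  set_bij (Theta_n X) [set: 'rV[R]_d] (hC X).
Proof.
move=> dn Th0.
have n0 : (0 < n)%N by exact: leq_ltn_trans (leq0n d) dn.
exact: (@main_lemma R d n X n0 Th0).
Qed.
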